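(* Let $E$ be a Banach lattice and let $\mathrm{l\text{-}Lwc}(E)$ denote the set of limitedly L-weakly compact operators $E\to E$. Then $\mathrm{l\text{-}Lwc}(E)$ is a norm-closed right ideal in the algebra $\mathrm{L}(E)$ of all bounded operators on $E$ (that is, a closed linear subspace such that $TS\in\mathrm{l\text{-}Lwc}(E)$ whenever $T\in\mathrm{l\text{-}Lwc}(E)$ and $S\in\mathrm{L}(E)$), and hence a subalgebra of $\mathrm{L}(E)$; moreover, this subalgebra is unital if and only if the identity operator $I_E$ is limitedly L-weakly compact.
   Context: All vector spaces are real and operators are linear and bounded. For a subset $A$ of a Banach lattice $F$, $\mathrm{sol}(A)=\bigcup_{a\in A}[-|a|,|a|]$. A subset $A\subseteq F$ is an Lwc-set if every disjoint sequence in $\mathrm{sol}(A)$ is norm-null. A bounded subset $A$ of a Banach space $X$ is limited if every weak$^\ast$-null sequence in $X'$ converges to $0$ uniformly on $A$. An operator $T:X\to F$ is limitedly L-weakly compact if $T$ maps every limited subset of $X$ onto an Lwc-subset of $F$. *)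

(* Defs.v *)
From HB Require Import structures.
From mathcomp Require Import all_boot all_order all_algebra.
From mathcomp Require Import all_classical all_reals all_analysis.
Set Implicit Arguments. Unset Strict Implicit. Unset Printing Implicit Defensive.
Import Order.TTheory GRing.Theory Num.Theory.
Import numFieldNormedType.Exports.
Local Open Scope classical_set_scope.
Local Open Scope ring_scope.

(* A Banach lattice structure on a (real) Banach space E: a join operation
   making E a join-semilattice (order x <= y :<-> join x y = y), compatible
   with the vector structure (so E is a Riesz space / vector lattice), and
   a lattice norm: |x| <= |y| implies ||x|| <= ||y||. *)
Record banach_lattice (R : realType) (E : completeNormedModType R) := BanachLattice {
  bl_join : E -> E -> E;
  bl_joinC : forall x y, bl_join x y = bl_join y x;
  bl_joinA : forall x y z, bl_join x (bl_join y z) = bl_join (bl_join x y) z;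
  bl_joinxx : forall x, bl_join x x = x;
  bl_le_add : forall x y z, bl_join x y = y -> bl_join (x + z) (y + z) = y + z;
  bl_le_scale : forall (a : R) x y, 0 <= a -> bl_join x y = y ->
      bl_join (a *: x) (a *: y) = a *: y;
  bl_norm_mono : forall x y,
      bl_join (bl_join x (- x)) (bl_join y (- y)) = bl_join y (- y) ->
      `|x| <= `|y|
}.

Section BL.
Context {R : realType} {E : completeNormedModType R} (L : banach_lattice E).

Definition bl_le (x y : E) : Prop := bl_join L x y = y.
Definition bl_meet (x y : E) : E := - bl_join L (- x) (- y).
Definition bl_abs (x : E) : E := bl_join L x (- x).

Definition sol (A : set E) : set E :=
  [set y | exists2 a, A a & bl_le (- bl_abs a) y /\ bl_le y (bl_abs a)].

Definition disjoint_seq (x : nat -> E) : Prop :=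
  forall n m, n <> m -> bl_meet (bl_abs (x n)) (bl_abs (x m)) = 0.

Definition Lwc_set (A : set E) : Prop :=
  forall x : nat -> E, disjoint_seq x -> (forall n, sol A (x n)) ->
    x @ \oo --> (0 : E).
End BL.

Section Ops.
Context {R : realType}.

Definition bounded_op {X Y : normedModType R} (T : X -> Y) : Prop :=
  (forall (a : R) (x y : X), T (a *: x + y) = a *: T x + T y) /\
  exists M : R, forall x, `|T x| <= M * `|x|.

Definition dual_elt {X : normedModType R} (f : X -> R^o) : Prop := bounded_op f.

Definition limited_set {X : normedModType R} (A : set X) : Prop :=
  (exists M : R, forall x, A x -> `|x| <= M) /\
  forall f : nat -> X -> R^o,
    (forall n, dual_elt (f n)) ->
    (forall x, (fun n => f n x) @ \oo --> (0 : R^o)) ->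
    forall eps : R, 0 < eps ->
      exists N : nat, forall n, (N <= n)%N -> forall x, A x -> `|f n x| <= eps.
End Ops.

Definition Lop {R : realType} (E : completeNormedModType R) : set (E -> E) :=
  [set T | bounded_op T].
Arguments Lop {R} E.

Definition lLwc {R : realType} {E : completeNormedModType R}
  (L : banach_lattice E) : set (E -> E) :=
  [set T | bounded_op T /\ forall A : set E, limited_set A -> Lwc_set L (T @` A)].

Definition op_subspace {R : realType} {E : completeNormedModType R}
  (J : set (E -> E)) : Prop :=
  J `<=` Lop E /\ J (fun _ => 0) /\
  (forall S T, J S -> J T -> J (fun x => S x + T x)) /\
  (forall (a : R) T, J T -> J (fun x => a *: T x)).

(* closed in the operator norm: ||T_n - T|| -> 0 written out *)
Definition op_norm_closed {R : realType} {E : completeNormedModType R}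
  (J : set (E -> E)) : Prop :=
  forall (Tn : nat -> E -> E) (T : E -> E),
    (forall n, J (Tn n)) -> Lop E T ->
    (forall eps : R, 0 < eps -> exists N : nat, forall n, (N <= n)%N ->
        forall x, `|Tn n x - T x| <= eps * `|x|) ->
    J T.

Definition right_ideal {R : realType} {E : completeNormedModType R}
  (J : set (E -> E)) : Prop :=
  forall T S, J T -> Lop E S -> J (T \o S).

Definition subalgebra {R : realType} {E : completeNormedModType R}
  (J : set (E -> E)) : Prop :=
  op_subspace J /\ forall S T, J S -> J T -> J (S \o T).

Definition unital_subalg {R : realType} {E : completeNormedModType R}
  (J : set (E -> E)) : Prop := subalgebra J /\ J idfun.

(* Main.v *)
Require Import Defs.
From HB Require Import structures.
From mathcomp Require Import all_boot all_order all_algebra.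
From mathcomp Require Import all_classical all_reals all_analysis.
From mathcomp Require Import ring lra.
Import Order.TTheory GRing.Theory Num.Theory.
Import numFieldNormedType.Exports.
Local Open Scope classical_set_scope.
Local Open Scope ring_scope.
Set Implicit Arguments. Unset Strict Implicit. Unset Printing Implicit Defensive.

Section Lat.
Context {R : realType} {E : completeNormedModType R} (L : banach_lattice E).
Local Notation j := (bl_join L).
Local Notation le := (bl_le L).
Local Notation ab := (bl_abs L).

Lemma ble_refl x : le x x. Proof. exact: bl_joinxx. Qed.
Lemma ble_trans x y z : le x y -> le y z -> le x z.
Proof. rewrite /bl_le => h1 h2. by rewrite -h2 bl_joinA h1. Qed.
Lemma ble_anti x y : le x y -> le y x -> x = y.
Proof. rewrite /bl_le => h1 h2. by rewrite -h1 bl_joinC h2. Qed.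
Lemma ble_jl x y : le x (j x y).
Proof. by rewrite /bl_le bl_joinA bl_joinxx. Qed.
Lemma ble_jr x y : le y (j x y).
Proof. rewrite bl_joinC; exact: ble_jl. Qed.
Lemma bj_lub x y z : le x z -> le y z -> le (j x y) z.
Proof. rewrite /bl_le => h1 h2. by rewrite -bl_joinA h2 h1. Qed.
Lemma bj_mono a b c d : le a b -> le c d -> le (j a c) (j b d).
Proof.
move=> h1 h2; apply: bj_lub; [apply: ble_trans h1 _; exact: ble_jl|
  apply: ble_trans h2 _; exact: ble_jr].
Qed.
Lemma ble_addr x y z : le x y -> le (x + z) (y + z).
Proof. exact: bl_le_add. Qed.
Lemma ble_addl x y z : le x y -> le (z + x) (z + y).
Proof. by rewrite ![z + _]addrC; apply: ble_addr. Qed.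
Lemma ble_add2 x y u v : le x y -> le u v -> le (x + u) (y + v).
Proof. move=> h1 h2; apply: ble_trans (ble_addr u h1) _; exact: ble_addl. Qed.
Lemma ble_opp x y : le x y -> le (- y) (- x).
Proof.
move=> h; have := ble_addr (- x - y) h.
by rewrite addrA subrr add0r addrCA subrr addr0.
Qed.
Lemma ble_subl x y z : le x (y + z) -> le (x - z) y.
Proof. move=> h; have := ble_addr (- z) h. by rewrite addrK. Qed.
Lemma ble_subr x y z : le (x - z) y -> le x (y + z).
Proof. move=> h; have := ble_addr z h. by rewrite subrK. Qed.

Lemma ble_abs x : le x (ab x). Proof. exact: ble_jl. Qed.
Lemma ble_absN x : le (- x) (ab x). Proof. exact: ble_jr. Qed.
Lemma abs_ge0 x : le 0 (ab x).
Proof.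
have h := ble_add2 (ble_abs x) (ble_absN x).
rewrite subrr in h.
have h2 : 0 <= (2:R)^-1 by rewrite invr_ge0.
have := bl_le_scale h2 h.
have e : (2:R)^-1 *: (ab x + ab x) = ab x.
  have e2 : (2:R)^-1 + 2^-1 = 1 by field.
  by rewrite scalerDr -scalerDl e2 scale1r.
by rewrite /bl_le scaler0 e.
Qed.

Lemma abs_pos x : le 0 x -> ab x = x.
Proof.
move=> h; apply: ble_anti; last exact: ble_abs.
apply: bj_lub; first exact: ble_refl.
apply: ble_trans (ble_opp h) _; by rewrite oppr0.
Qed.
Lemma abs_abs x : ab (ab x) = ab x.
Proof. exact/abs_pos/abs_ge0. Qed.
Lemma abs_lub x c : le (- c) x -> le x c -> le (ab x) c.
Proof. move=> h1 h2; apply: bj_lub => //. by have := ble_opp h1; rewrite opprK. Qed.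
Lemma abs_tri u v : le (ab (u + v)) (ab u + ab v).
Proof.
apply: bj_lub; first exact: ble_add2 (ble_abs u) (ble_abs v).
by rewrite opprD; apply: ble_add2 (ble_absN u) (ble_absN v).
Qed.
Lemma ble_sol y a : le 0 y -> le y (ab a) -> le (- ab a) y /\ le y (ab a).
Proof.
move=> h1 h2; split => //; apply: ble_trans h1.
by have := ble_opp (abs_ge0 a); rewrite oppr0.
Qed.
Lemma sol_abs x c : le (- ab c) x -> le x (ab c) -> le (ab x) (ab c).
Proof. exact: abs_lub. Qed.

Lemma decomp p q w : le 0 p -> le 0 q -> le 0 w -> le p (q + w) ->
  let z := j 0 (p - q) in let y := p - z in
  [/\ p = y + z, le 0 y, le y q, le y p & [/\ le 0 z, le z w & le z p]].
Proof.
move=> hp hq hw hpqw z y.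
have hz0 : le 0 z by exact: ble_jl.
have hzp : le z p.
  apply: bj_lub => //. apply: ble_subl; rewrite -[X in le X _]addr0. exact: ble_addl.
split.
- by rewrite /y subrK.
- by have := ble_addr (- z) hzp; rewrite subrr.
- rewrite /y; apply: ble_subl; rewrite addrC; apply: ble_subr. exact: ble_jr.
- rewrite /y -[X in le _ X]addr0; apply: ble_addl.
  by have := ble_opp hz0; rewrite oppr0.
- split => //. apply: bj_lub => //. by apply: ble_subl; rewrite addrC.
Qed.

Lemma disj_dom y1 y2 x1 x2 : le 0 y1 -> le y1 (ab x1) -> le 0 y2 -> le y2 (ab x2) ->
  bl_meet L (ab x1) (ab x2) = 0 -> bl_meet L (ab y1) (ab y2) = 0.
Proof.
move=> h1 h2 h3 h4; rewrite /bl_meet (abs_pos h1) (abs_pos h3) => /eqP.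
rewrite oppr_eq0 => /eqP e; apply/eqP; rewrite oppr_eq0; apply/eqP.
apply: ble_anti.
- apply: bj_lub; [have := ble_opp h1 | have := ble_opp h3]; by rewrite oppr0.
- rewrite -e; apply: bj_mono; exact: ble_opp.
Qed.

Lemma norm_le y w : le 0 y -> le y w -> `|y| <= `|w|.
Proof.
move=> h1 h2; apply: (@bl_norm_mono _ _ L y w); change (le (ab y) (ab w)).
rewrite (abs_pos h1) abs_pos //; exact: ble_trans h2.
Qed.
Lemma norm_abs x : `|x| <= `|ab x|.
Proof. apply: (@bl_norm_mono _ _ L x (ab x)); change (le (ab x) (ab (ab x))); rewrite abs_abs; exact: ble_refl. Qed.

Lemma norm_abs2 x : `|ab x| <= `|x|.
Proof. apply: (@bl_norm_mono _ _ L (ab x) x); change (le (ab (ab x)) (ab x)); rewrite abs_abs; exact: ble_refl. Qed.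

Lemma core (x u v : nat -> E) : disjoint_seq L x ->
  (forall n, le (ab (x n)) (ab (u n) + ab (v n))) ->
  exists y z : nat -> E, [/\ disjoint_seq L y, disjoint_seq L z,
    forall n, le 0 (y n) /\ le (y n) (ab (u n)),
    forall n, le 0 (z n) /\ le (z n) (ab (v n)) &
    forall n, `|x n| <= `|y n| + `|z n|].
Proof.
move=> hd hx.
have D n := decomp (abs_ge0 (x n)) (abs_ge0 (u n)) (abs_ge0 (v n)) (hx n).
exists (fun n => ab (x n) - j 0 (ab (x n) - ab (u n))),
       (fun n => j 0 (ab (x n) - ab (u n))); split.
- move=> n m nm; have [_ h1 _ h2 _] := D n; have [_ h3 _ h4 _] := D m.
  exact: disj_dom h1 h2 h3 h4 (hd n m nm).
- move=> n m nm; have [_ _ _ _ [h1 _ h2]] := D n; have [_ _ _ _ [h3 _ h4]] := D m.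
  exact: disj_dom h1 h2 h3 h4 (hd n m nm).
- by move=> n; have [_ h1 h2 _ _] := D n.
- by move=> n; have [_ _ _ _ [h1 h2 _]] := D n.
- move=> n; have [e h1 _ _ [h2 _ _]] := D n.
  apply: le_trans (norm_abs (x n)) _; rewrite [X in `|X|]e; exact: ler_normD.
Qed.
End Lat.

Section Ana.
Context {R : realType}.

Lemma cvg0P {X : normedModType R} (x : nat -> X) :
  (forall eps : R, 0 < eps -> exists N, forall n, (N <= n)%N -> `|x n| <= eps) ->
  x @ \oo --> (0 : X).
Proof.
move=> h; apply/cvgrPdist_le => eps he; have [N hN] := h eps he.
exists N => // n hn; rewrite sub0r normrN; exact: hN.
Qed.

Lemma cvg0E {X : normedModType R} (x : nat -> X) : x @ \oo --> (0 : X) ->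
  forall eps : R, 0 < eps -> exists N, forall n, (N <= n)%N -> `|x n| <= eps.
Proof.
move/cvgrPdist_le => h eps he; have [N _ hN] := h eps he.
exists N => n hn; have := hN n hn; by rewrite sub0r normrN.
Qed.

Lemma lin0 {X Y : normedModType R} (T : X -> Y) :
  (forall (a : R) x y, T (a *: x + y) = a *: T x + T y) -> T 0 = 0.
Proof.
move=> H; have := H 1 0 0; rewrite !scale1r addr0.
by move=> /(congr1 (fun v => v - T 0)); rewrite subrr addrK => <-.
Qed.

Lemma linZ {X Y : normedModType R} (T : X -> Y) :
  (forall (a : R) x y, T (a *: x + y) = a *: T x + T y) ->
  forall k x, T (k *: x) = k *: T x.
Proof. move=> H k x; have := H k x 0; by rewrite addr0 (lin0 H) addr0. Qed.

Lemma bnd_pos {X Y : normedModType R} (T : X -> Y) : bounded_op T ->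
  exists M : R, 0 <= M /\ forall x, `|T x| <= M * `|x|.
Proof.
move=> [_ [M hM]]; exists `|M|; split => // x.
apply: le_trans (hM x) _; apply: ler_wpM2r => //; exact: ler_norm.
Qed.
End Ana.

Section Main.
Context {R : realType} {E : completeNormedModType R} (L : banach_lattice E).
Local Notation j := (bl_join L).
Local Notation le := (bl_le L).
Local Notation ab := (bl_abs L).

Lemma lwc_mono (B C : set E) : B `<=` C -> Lwc_set L C -> Lwc_set L B.
Proof.
move=> sub HC x hd hs; apply: HC hd _ => n.
have [a Ba h] := hs n; exists a => //; exact: sub.
Qed.

Lemma limited_scale (A : set E) (k : R) : limited_set A ->
  limited_set ((fun a => k *: a) @` A).
Proof.
move=> [[M hM] hA]; split.
  exists (`|k| * M) => _ [a Aa <-]; rewrite normrZ; apply: ler_wpM2l => //; exact: hM.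
move=> f hf hc eps he.
have hk : 0 < `|k| + 1 by rewrite ltr_wpDl.
have he' : 0 < eps / (`|k| + 1) by rewrite divr_gt0.
have [N hN] := hA f hf hc _ he'.
exists N => n hn _ [a Aa <-].
have [lin _] := hf n.
rewrite (linZ lin) normrM.
have h1 := hN n hn a Aa.
have e : eps / (`|k| + 1) * (`|k| + 1) = eps by rewrite divfK // gt_eqF.
set d := eps / (`|k| + 1) in h1 he' e *.
have h0 : 0 <= `|k| by [].
have h2 : 0 <= `|f n a| by [].
nra.
Qed.

Lemma limited_op (A : set E) (S : E -> E) : limited_set A -> bounded_op S ->
  limited_set (S @` A).
Proof.
move=> [[M hM] hA] hS; have [MS [hMS0 hMS]] := bnd_pos hS; have [linS _] := hS.
split.
  exists (MS * M) => _ [a Aa <-]; apply: le_trans (hMS a) _.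
  apply: ler_wpM2l => //; exact: hM.
move=> f hf hc eps he.
have hg : forall n, dual_elt (fun x => f n (S x)).
  move=> n; have := hf n => /bnd_pos [Mf [hMf0 hMf]]; have [linf _] := hf n.
  split; first by move=> a x y; rewrite linS linf.
  exists (Mf * MS) => x; apply: le_trans (hMf (S x)) _.
  rewrite -mulrA; apply: ler_wpM2l => //.
have [N hN] := hA _ hg (fun x => hc (S x)) eps he.
exists N => n hn _ [a Aa <-]; exact: hN.
Qed.

Lemma lLwc_zero : lLwc L (fun _ => 0).
Proof.
split.
  split; first by move=> a x y; rewrite scaler0 addr0.
  by exists 0 => x; rewrite normr0 mul0r.
move=> A _ x _ hs; apply: cvg0P => eps he; exists 0%N => n _.
have [_ [a _ <-] [h1 h2]] := hs n.
have a0 : ab 0 = 0 by apply: abs_pos; exact: ble_refl.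
rewrite a0 oppr0 in h1 h2.
by rewrite (ble_anti h2 h1) normr0 ltW.
Qed.

Lemma sol_img (T : E -> E) (A : set E) (x : nat -> E) :
  (forall n, sol L (T @` A) (x n)) ->
  exists af : nat -> E, forall n, A (af n) /\ le (ab (x n)) (ab (T (af n))).
Proof.
move=> hs.
have H : forall n, exists a, A a /\ le (ab (x n)) (ab (T a)).
  move=> n; have [_ [a Aa <-] [h1 h2]] := hs n; exists a; split => //; exact: sol_abs.
have [af haf] := boolp.choice H; by exists af.
Qed.

Lemma lLwc_add S T : lLwc L S -> lLwc L T -> lLwc L (fun x => S x + T x).
Proof.
move=> [hS HS] [hT HT]; split.
  have [linS [MS hMS]] := hS; have [linT [MT hMT]] := hT; split.
    by move=> a x y; rewrite linS linT scalerDr addrACA.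
  exists (MS + MT) => x; rewrite mulrDl; apply: le_trans (ler_normD _ _) _.
  exact: lerD.
move=> A hA x hd hs.
have [af haf] := sol_img hs.
have hx n : le (ab (x n)) (ab (S (af n)) + ab (T (af n))).
  exact: ble_trans (haf n).2 (abs_tri L (S (af n)) (T (af n))).
have [y [z [hy hz hy' hz' hn]]] := core hd hx.
have cy := HS A hA y hy (fun n => ex_intro2 _ _ (S (af n))
   (ex_intro2 _ _ (af n) (haf n).1 erefl) (ble_sol (hy' n).1 (hy' n).2)).
have cz := HT A hA z hz (fun n => ex_intro2 _ _ (T (af n))
   (ex_intro2 _ _ (af n) (haf n).1 erefl) (ble_sol (hz' n).1 (hz' n).2)).
apply: cvg0P => eps he.
have he2 : 0 < eps / 2 by rewrite divr_gt0.
have [N1 h1] := cvg0E cy he2; have [N2 h2] := cvg0E cz he2.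
exists (maxn N1 N2) => n hnn; apply: le_trans (hn n) _.
rewrite [leRHS](splitr eps); move: hnn; rewrite geq_max => /andP[n1 n2].
apply: lerD; [exact: h1 | exact: h2].
Qed.

Lemma lLwc_scale k T : lLwc L T -> lLwc L (fun x => k *: T x).
Proof.
move=> [hT HT]; have [linT [MT hMT]] := hT; split.
  split; first by move=> a x y; rewrite linT scalerDr !scalerA mulrC.
  exists (`|k| * MT) => x; rewrite normrZ -mulrA; apply: ler_wpM2l => //.
move=> A hA; apply: (lwc_mono _ (HT _ (limited_scale k hA))).
move=> _ [a Aa <-]; exists (k *: a); first by exists a.
by rewrite (linZ linT).
Qed.

Lemma lLwc_comp T S : lLwc L T -> bounded_op S -> lLwc L (T \o S).
Proof.
move=> [hT HT] hS; split.
  have [linT _] := hT; have [linS _] := hS.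
  have [MT [hMT0 hMT]] := bnd_pos hT; have [MS [hMS0 hMS]] := bnd_pos hS.
  split; first by move=> a x y /=; rewrite linS linT.
  exists (MT * MS) => x /=; apply: le_trans (hMT _) _.
  rewrite -mulrA; apply: ler_wpM2l => //.
move=> A hA; apply: (lwc_mono _ (HT _ (limited_op hA hS))).
move=> _ [a Aa <-]; exists (S a) => //; by exists a.
Qed.

Lemma lLwc_closed : op_norm_closed (lLwc L).
Proof.
move=> Tn T hTn hT hc; split => // A hA x hd hs.
have [[M hM] _] := hA.
have [af haf] := sol_img hs.
apply: cvg0P => eps he.
pose M' := `|M| + 1.
have hM' : 0 < M' by rewrite /M' ltr_wpDl.
pose d := eps / (2 * M').
have hd' : 0 < d by rewrite /d divr_gt0 // mulr_gt0.
have [N0 hN0] := hc d hd'.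
pose U := Tn N0.
have hx n : le (ab (x n)) (ab (U (af n)) + ab (T (af n) - U (af n))).
  apply: ble_trans (haf n).2 _.
  have e : U (af n) + (T (af n) - U (af n)) = T (af n) by rewrite addrC subrK.
  by have := abs_tri L (U (af n)) (T (af n) - U (af n)); rewrite e.
have [y [z [hy hz hy' hz' hn]]] := core hd hx.
have cy := (hTn N0).2 A hA y hy (fun n => ex_intro2 _ _ (U (af n))
   (ex_intro2 _ _ (af n) (haf n).1 erefl) (ble_sol (hy' n).1 (hy' n).2)).
have he2 : 0 < eps / 2 by rewrite divr_gt0.
have [N1 h1] := cvg0E cy he2.
exists N1 => n hnn; apply: le_trans (hn n) _.
rewrite [leRHS](splitr eps); apply: lerD; first exact: h1.
apply: le_trans (norm_le (hz' n).1 (hz' n).2) _.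
apply: le_trans (norm_abs2 L _) _.
rewrite distrC; apply: le_trans (hN0 N0 (leqnn _) (af n)) _.
have ha : `|af n| <= M' by apply: le_trans (hM _ (haf n).1) _; rewrite /M'; apply: le_trans (ler_norm M) _; rewrite lerDl.
have e : d * M' = eps / 2.
  rewrite /d; field; exact: lt0r_neq0.
rewrite -e; apply: ler_wpM2l => //; exact: ltW.
Qed.
End Main.

Theorem corollary3p3 (R : realType) (E : completeNormedModType R)
  (L : banach_lattice E) :
  [/\ op_subspace (lLwc L), op_norm_closed (lLwc L), right_ideal (lLwc L),
      subalgebra (lLwc L) &
      (unital_subalg (lLwc L) <-> lLwc L idfun)].
Proof.
have sub : op_subspace (lLwc L).
  split; first by move=> T [].
  split; first exact: lLwc_zero.
  split; first by move=> S T; exact: lLwc_add.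
  by move=> a T; exact: lLwc_scale.
have ri : right_ideal (lLwc L) by move=> T S hT hS; exact: lLwc_comp.
have sa : subalgebra (lLwc L).
  split => // S T hS hT; apply: ri => //; exact: hT.1.
split => //; first exact: lLwc_closed.
by split => [[]|h].
Qed.
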